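(* Let $M\in S_2^+$, let $e_1,\dots,e_n\in\mathbb Z^2$ with $n>2$, and let $\varepsilon\in\{-1,1\}$. Assume that for all $1\le i\le n$, with $e_{n+1}:=e_1$, $$\det(e_i,e_{i+1})=\varepsilon,\qquad \langle e_i,Me_{i+1}\rangle>-\tfrac12\min\{\|e_i\|_M^2,\|e_{i+1}\|_M^2\}.$$ Then every $M$-reduced basis $(e,f)$ of $\mathbb Z^2$ satisfies $\{e,f\}\subset\{e_1,\dots,e_n\}$.
   Context: $\|e\|_M:=\sqrt{\langle e,Me\rangle}$. A basis of $\mathbb Z^2$ is a pair in $\mathbb Z^2$ with determinant $\pm1$. An $M$-reduced basis is a basis $(e_1,e_2)$ with $\|e_1\|_M=\min\{\|e\|_M:e\in\mathbb Z^2\setminus\{0\}\}$ and $\|e_2\|_M=\min\{\|e\|_M:e\in\mathbb Z^2\setminus e_1\mathbb Z\}$. *)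

(* Defs.v *)
From Stdlib Require Import Reals ZArith.
Open Scope R_scope.

(* Real 2x2 matrices, stored as rows ((m11, m12), (m21, m22)). *)
Definition mat2 : Type := ((R * R) * (R * R))%type.

Definition m11 (M : mat2) : R := fst (fst M).
Definition m12 (M : mat2) : R := snd (fst M).
Definition m21 (M : mat2) : R := fst (snd M).
Definition m22 (M : mat2) : R := snd (snd M).

Definition innerR (u v : R * R) : R := fst u * fst v + snd u * snd v.
Definition mulmv (M : mat2) (v : R * R) : R * R :=
  (m11 M * fst v + m12 M * snd v, m21 M * fst v + m22 M * snd v).

Definition toR2 (e : Z * Z) : R * R := (IZR (fst e), IZR (snd e)).

Definition S2plus (M : mat2) : Prop :=
  m12 M = m21 M /\
  (forall v : R * R, v <> (0, 0) -> 0 < innerR v (mulmv M v)).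

Definition ipM (M : mat2) (e f : Z * Z) : R := innerR (toR2 e) (mulmv M (toR2 f)).

Definition normM (M : mat2) (e : Z * Z) : R := sqrt (ipM M e e).

Definition det2 (e f : Z * Z) : Z := (fst e * snd f - snd e * fst f)%Z.

Definition is_basis (e f : Z * Z) : Prop := det2 e f = 1%Z \/ det2 e f = (-1)%Z.

Definition in_line (e v : Z * Z) : Prop :=
  exists k : Z, v = (k * fst e, k * snd e)%Z.

Definition M_reduced (M : mat2) (e1 e2 : Z * Z) : Prop :=
  is_basis e1 e2 /\
  (e1 <> (0, 0)%Z /\ forall v : Z * Z, v <> (0, 0)%Z -> normM M e1 <= normM M v) /\
  (~ in_line e1 e2 /\ forall v : Z * Z, ~ in_line e1 v -> normM M e2 <= normM M v).

(* Main.v *)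
Require Import Defs.
From Stdlib Require Import Reals ZArith Lra Lia Psatz Classical.
Open Scope R_scope.

Lemma ipM_lin (M : mat2) (a b : Z) (u w : Z*Z) :
  m12 M = m21 M ->
  ipM M ((a * fst u + b * fst w)%Z, (a * snd u + b * snd w)%Z) ((a * fst u + b * fst w)%Z, (a * snd u + b * snd w)%Z)
  = IZR a ^ 2 * ipM M u u + 2 * IZR a * IZR b * ipM M u w + IZR b ^ 2 * ipM M w w.
Proof.
  intros Hs. destruct u as [u1 u2], w as [w1 w2]. destruct M as [[p q] [r s]].
  unfold ipM, innerR, mulmv, toR2, m11, m12, m21, m22 in *; simpl in *.
  rewrite !plus_IZR, !mult_IZR. subst q. ring.
Qed.

Lemma ipM_nonneg M v : S2plus M -> 0 <= ipM M v v.
Proof.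
  intros [_ Hp]. destruct (classic (toR2 v = (0,0))) as [H|H].
  - unfold ipM. rewrite H. unfold innerR, mulmv; simpl. lra.
  - left. apply Hp. exact H.
Qed.

Lemma norm_sq M v : S2plus M -> normM M v ^ 2 = ipM M v v.
Proof. intros H. unfold normM. apply pow2_sqrt. apply ipM_nonneg; auto. Qed.

Lemma norm_le M u v : S2plus M -> normM M u <= normM M v -> ipM M u u <= ipM M v v.
Proof.
  intros H Hle. rewrite <- !norm_sq by auto. apply pow_incr. split; auto.
  unfold normM; apply sqrt_pos.
Qed.

Lemma trans_det (s t : Z) (u w z f : Z*Z) :
  (s * det2 u w > 0)%Z -> (s * det2 w z > 0)%Z ->
  (t * det2 u f > 0)%Z -> (t * det2 w f > 0)%Z -> (t * det2 z f > 0)%Z ->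
  (s * det2 u z > 0)%Z.
Proof.
  intros H1 H2 H3 H4 H5.
  assert (Hid : (s*det2 u w * (t*det2 z f) + s*det2 w z * (t * det2 u f) - (s * det2 u z) * (t * det2 w f) = 0)%Z).
  { destruct u, w, z, f; unfold det2; simpl; ring. }
  revert H1 H2 H3 H4 H5 Hid.
  generalize (s*det2 u w)%Z (t*det2 z f)%Z (s*det2 w z)%Z (t * det2 u f)%Z (s * det2 u z)%Z (t * det2 w f)%Z.
  intros A D B C X E H1 H2 H3 H4 H5 Hid.
  assert (A*D > 0)%Z by nia. assert (B*C>0)%Z by nia. nia.
Qed.

Lemma no_halfplane (n : nat) (e : nat -> Z*Z) (s t : Z) (f : Z*Z) :
  (n > 2)%nat -> (s = 1 \/ s = -1)%Z ->
  (forall i, (i < n)%nat -> det2 (e i) (e ((i+1) mod n)%nat) = s) ->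
  (forall i, (i < n)%nat -> (t * det2 (e i) f > 0)%Z) -> False.
Proof.
  intros Hn Hs Hd Hf.
  assert (Hs2 : (s*s = 1)%Z) by (destruct Hs; subst; lia).
  assert (Hc : forall k, (1 <= k < n)%nat -> (s * det2 (e 0%nat) (e k) > 0)%Z).
  { induction k as [|k IH]; intros Hk; [lia|].
    destruct (Nat.eq_dec k 0) as [->|Hk0].
    - pose proof (Hd 0%nat ltac:(lia)) as H. rewrite Nat.mod_small in H by lia. simpl in H. rewrite H. lia.
    - apply (trans_det s t (e 0%nat) (e k) (e (S k)) f); try (apply Hf; lia).
      + apply IH; lia.
      + pose proof (Hd k ltac:(lia)) as H. rewrite Nat.mod_small in H by lia.
        replace (k+1)%nat with (S k) in H by lia. rewrite H. lia. }
  pose proof (Hd (n-1)%nat ltac:(lia)) as H.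
  replace (n-1+1)%nat with n in H by lia. rewrite Nat.Div0.mod_same in H by lia.
  assert (Hcontra: (s * det2 (e 0%nat) (e 0%nat) > 0)%Z).
  { apply (trans_det s t (e 0%nat) (e (n-1)%nat) (e 0%nat) f); try (apply Hf; lia).
    apply Hc; lia. rewrite H; lia. }
  unfold det2 in Hcontra. nia.
Qed.

Lemma exists_cone (n : nat) (e : nat -> Z*Z) (s : Z) (f : Z*Z) :
  (n > 2)%nat -> (s = 1 \/ s = -1)%Z ->
  (forall i, (i < n)%nat -> det2 (e i) (e ((i+1) mod n)%nat) = s) ->
  exists i, (i < n)%nat /\ (s * det2 (e i) f >= 0)%Z /\ (s * det2 f (e ((i+1) mod n)%nat) >= 0)%Z.
Proof.
  intros Hn Hs Hd.
  apply NNPP; intro Hno.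
  set (d := fun i => (s * det2 (e i) f)%Z).
  assert (Hdet : forall x y, det2 x y = (- det2 y x)%Z) by (intros [] []; unfold det2; simpl; ring).
  assert (H1 : forall i, (i < n)%nat -> (d i >= 0)%Z -> (d ((i+1) mod n)%nat > 0)%Z).
  { intros i Hi Hdi. destruct (Z_gt_le_dec (d ((i+1) mod n)%nat) 0) as [?|Hle]; auto.
    exfalso; apply Hno; exists i; repeat split; auto. unfold d in Hle. rewrite Hdet. nia. }
  destruct (Z_ge_lt_dec (d 0%nat) 0) as [H0|H0].
  - assert (Hall : forall k, (k < n)%nat -> (d k >= 0)%Z).
    { induction k; intros Hk; auto.
      pose proof (H1 k ltac:(lia) (IHk ltac:(lia))) as H. rewrite Nat.mod_small in H by lia.
      replace (k+1)%nat with (S k) in H by lia. unfold d in *; lia. }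
    apply (no_halfplane n e s s f); auto.
    intros i Hi. change (d i > 0)%Z.
    destruct i as [|j].
    + pose proof (H1 (n-1)%nat ltac:(lia) (Hall (n-1)%nat ltac:(lia))) as H.
      replace (n-1+1)%nat with n in H by lia. rewrite Nat.Div0.mod_same in H by lia. exact H.
    + pose proof (H1 j ltac:(lia) (Hall j ltac:(lia))) as H. rewrite Nat.mod_small in H by lia.
      replace (j+1)%nat with (S j) in H by lia. exact H.
  - assert (H2 : forall i, (i < n)%nat -> (d ((i+1) mod n)%nat < 0)%Z -> (d i < 0)%Z).
    { intros i Hi Hlt. destruct (Z_ge_lt_dec (d i) 0) as [g|g]; auto. specialize (H1 i Hi g). lia. }
    assert (Hall : forall m, (m < n)%nat -> (d (n-1-m)%nat < 0)%Z).
    { induction m; intros Hm.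
      - apply H2; [lia|]. replace (n-1-0+1)%nat with n by lia. rewrite Nat.Div0.mod_same by lia. exact H0.
      - apply H2; [lia|]. rewrite Nat.mod_small by lia.
        replace (n-1-S m+1)%nat with (n-1-m)%nat by lia. apply IHm; lia. }
    apply (no_halfplane n e s (-s) f); auto.
    intros i Hi. pose proof (Hall (n-1-i)%nat ltac:(lia)) as H.
    replace (n-1-(n-1-i))%nat with i in H by lia. unfold d in H. nia.
Qed.
Lemma real_ineq (A B x y c : R) : 1 <= A -> 1 <= B -> 0 <= x -> 0 <= y ->
  c > -(1/2) * Rmin x y -> A^2*x + 2*A*B*c + B^2*y > x /\ A^2*x + 2*A*B*c + B^2*y > y.
Proof.
  intros HA HB Hx Hy Hc.
  assert (HAB : 0 < A*B) by nra.
  assert (Hq : A^2 - A*B + B^2 >= 1) by nra.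
  destruct (Rle_dec x y) as [Hxy|Hxy].
  - rewrite Rmin_left in Hc by lra.
    assert (H1 : 2*A*B*c > - (A*B*x)) by nra.
    split.
    + assert (A^2*x + B^2*y - A*B*x >= x) by nra. nra.
    + assert (A^2*x + B^2*y - A*B*x >= y).
      { destruct (Rle_dec B A).
        - assert (x*(A*(A-B)) >= 0) by (apply Rle_ge; apply Rmult_le_pos; nra). assert ((B^2-1)*y>=0) by (apply Rle_ge; apply Rmult_le_pos; nra). nra.
        - assert ((y-x)*(A*(B-A)) >= 0) by (apply Rle_ge; apply Rmult_le_pos; nra). assert (y*(A^2-A*B+B^2-1) >= 0) by (apply Rle_ge; apply Rmult_le_pos; nra). nra. }
      nra.
  - rewrite Rmin_right in Hc by lra.
    assert (H1 : 2*A*B*c > - (A*B*y)) by nra.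
    split.
    + assert (A^2*x + B^2*y - A*B*y >= x).
      { destruct (Rle_dec A B).
        - assert (y*(B*(B-A)) >= 0) by (apply Rle_ge; apply Rmult_le_pos; nra). assert ((A^2-1)*x>=0) by (apply Rle_ge; apply Rmult_le_pos; nra). nra.
        - assert ((x-y)*(B*(A-B)) >= 0) by (apply Rle_ge; apply Rmult_le_pos; nra). assert (x*(A^2-A*B+B^2-1) >= 0) by (apply Rle_ge; apply Rmult_le_pos; nra). nra. }
      nra.
    + assert (A^2*x + B^2*y - A*B*y >= y) by nra. nra.
Qed.
Lemma key (M : mat2) (n : nat) (e : nat -> Z*Z) (eps : Z) (f : Z*Z) :
  S2plus M -> (n>2)%nat -> (eps = 1 \/ eps = -1)%Z ->
  (forall i : nat, (i < n)%nat ->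
     det2 (e i) (e ((i + 1) mod n)%nat) = eps /\
     ipM M (e i) (e ((i + 1) mod n)%nat) >
       - (1 / 2) * Rmin (normM M (e i) ^ 2) (normM M (e ((i + 1) mod n)%nat) ^ 2)) ->
  f <> (0,0)%Z ->
  (forall k g, (1 <= k)%Z -> f = (k * fst g, k * snd g)%Z -> k = 1%Z) ->
  (forall u w, det2 u w = eps -> ipM M f f <= ipM M u u \/ ipM M f f <= ipM M w w) ->
  exists i, (i < n)%nat /\ e i = f.
Proof.
  intros HM Hn Hs He Hf0 Hprim Hmin.
  destruct (exists_cone n e eps f Hn Hs (fun i Hi => proj1 (He i Hi))) as [i [Hi [Ha Hb]]].
  set (j := ((i+1) mod n)%nat) in *.
  assert (Hj : (j < n)%nat) by (apply Nat.mod_upper_bound; lia).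
  destruct (He i Hi) as [Hd Hc]. fold j in Hd, Hc.
  set (u := e i) in *. set (w := e j) in *.
  set (a := (eps * det2 f w)%Z) in *. set (b := (eps * det2 u f)%Z) in *.
  assert (Hfe : f = ((a * fst u + b * fst w)%Z, (a * snd u + b * snd w)%Z)).
  { subst a b. clearbody u w. destruct f as [x y], u as [u1 u2], w as [w1 w2].
    unfold det2 in *; simpl in *.
    assert (H1 : (x * (u1*w2 - u2*w1) = x*eps)%Z) by (rewrite Hd; ring).
    assert (H2 : (y * (u1*w2 - u2*w1) = y*eps)%Z) by (rewrite Hd; ring).
    destruct Hs; subst eps; f_equal; nia. }
  destruct (Z.eq_dec a 0) as [Ha0|Ha0].
  -
    assert (Hb1 : (1 <= b)%Z).
    { destruct (Z.eq_dec b 0) as [Hb0|Hb0]; [|lia]. exfalso. apply Hf0.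
      rewrite Hfe, Ha0, Hb0. f_equal; ring. }
    assert (Hfw : f = (b * fst w, b * snd w)%Z) by (rewrite Hfe at 1; rewrite Ha0; f_equal; ring).
    pose proof (Hprim b w Hb1 Hfw) as ->.
    exists j; split; auto. rewrite Hfw, !Z.mul_1_l. apply surjective_pairing.
  - destruct (Z.eq_dec b 0) as [Hb0|Hb0].
    + assert (Ha1 : (1 <= a)%Z) by lia.
      assert (Hfu : f = (a * fst u + 0 * fst w, a * snd u + 0 * snd w)%Z) by (rewrite Hfe at 1; rewrite Hb0; reflexivity).
      assert (Hfu' : f = (a * fst u, a * snd u)%Z) by (rewrite Hfu at 1; f_equal; ring).
      pose proof (Hprim a u Ha1 Hfu') as ->.
      exists i; split; auto. rewrite Hfu', !Z.mul_1_l. apply surjective_pairing.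
    + exfalso.
      assert (Ha1 : (1 <= IZR a)) by (apply IZR_le; lia).
      assert (Hb1 : (1 <= IZR b)) by (apply IZR_le; lia).
      rewrite !norm_sq in Hc by auto.
      pose proof (real_ineq (IZR a) (IZR b) (ipM M u u) (ipM M w w) (ipM M u w) Ha1 Hb1
        (ipM_nonneg M u HM) (ipM_nonneg M w HM) Hc) as [Hx Hy].
      rewrite <- (ipM_lin M a b u w (proj1 HM)) in Hx, Hy. rewrite <- Hfe in Hx, Hy.
      destruct (Hmin u w Hd); lra.
Qed.

Lemma prim_aux (k X : Z) : (1 <= k)%Z -> (k * X = 1 \/ k * X = -1)%Z -> k = 1%Z.
Proof.
  intros Hk H. destruct (Z.lt_trichotomy X 0) as [HX|[HX|HX]].
  - assert (k * X <= - k)%Z by nia. lia.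
  - subst X. rewrite Z.mul_0_r in H. lia.
  - assert (k * X >= k)%Z by nia. lia.
Qed.

Theorem mainTheorem11 (M : mat2) (n : nat) (e : nat -> Z * Z) (eps : Z) :
  S2plus M ->
  (n > 2)%nat ->
  (eps = 1%Z \/ eps = (-1)%Z) ->
  (forall i : nat, (i < n)%nat ->
     det2 (e i) (e ((i + 1) mod n)%nat) = eps /\
     ipM M (e i) (e ((i + 1) mod n)%nat) >
       - (1 / 2) * Rmin (normM M (e i) ^ 2) (normM M (e ((i + 1) mod n)%nat) ^ 2)) ->
  forall f1 f2 : Z * Z, M_reduced M f1 f2 ->
    (exists i : nat, (i < n)%nat /\ e i = f1) /\
    (exists j : nat, (j < n)%nat /\ e j = f2).
Proof.
  intros HM Hn Hs He f1 f2 [Hbas [[Hf10 Hmin1] [Hnl Hmin2]]].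
  assert (Hepsnz : forall u w, det2 u w = eps -> u <> (0,0)%Z /\ w <> (0,0)%Z).
  { intros u w Hd; split; intro H; rewrite H in Hd; unfold det2 in Hd; simpl in Hd; destruct Hs; lia. }
  split.
  - apply (key M n e eps f1); auto.
    + intros k g Hk ->. apply (prim_aux k (fst g * snd f2 - snd g * fst f2)); auto.
      unfold is_basis, det2 in Hbas; simpl in Hbas.
      destruct Hbas as [H|H]; [left|right]; rewrite <- H; ring.
    + intros u w Hd. left. apply norm_le; auto. apply Hmin1. apply (Hepsnz u w Hd).
  - apply (key M n e eps f2); auto.
    + intro H. apply Hnl. exists 0%Z. rewrite H. reflexivity.
    + intros k g Hk ->. apply (prim_aux k (fst f1 * snd g - snd f1 * fst g)); auto.
      unfold is_basis, det2 in Hbas; simpl in Hbas.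
      destruct Hbas as [H|H]; [left|right]; rewrite <- H; ring.
    + intros u w Hd.
      destruct (classic (in_line f1 u)) as [[k Hk]|Hu].
      * destruct (classic (in_line f1 w)) as [[l Hl]|Hw].
        -- exfalso. subst u w. unfold det2 in Hd; simpl in Hd.
           assert (H0 : (k * fst f1 * (l * snd f1) - k * snd f1 * (l * fst f1) = 0)%Z) by ring.
           destruct Hs; lia.
        -- right. apply norm_le; auto.
      * left. apply norm_le; auto.
Qed.
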